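(* In the setting of the SigSAS system with $0<\lambda<\min\{1,1/\widetilde M\}$, there exists a linear map $A_{\lambda,l,p}:T^{l+1}(\mathbb R^{p+1})\to T^{l+1}(\mathbb R^{p+1})$ whose matrix in the canonical basis is invertible and has nonnegative entries, such that $U^{\rm SigSAS}_{\lambda,l,p}(\mathbf z)_t=A_{\lambda,l,p}\widehat{\mathbf z}_t$ for all $\mathbf z\in K_M$ and $t\in\mathbb Z_-$.
   Context: $M>0$, $l,p\in\mathbb N$, $\widetilde M=\sum_{j=0}^pM^j$, $K_M=[-M,M]^{\mathbb Z_-}$. $T^{l+1}(\mathbb R^{p+1})=(\mathbb R^{p+1})^{\otimes(l+1)}$ with canonical basis $\mathbf e_{i_1}\otimes\cdots\otimes\mathbf e_{i_{l+1}}$ and Euclidean norm of coefficients. $\pi_l:T^{l+1}(\mathbb R^{p+1})\to T^{l}(\mathbb R^{p+1})$ is the linear map $\pi_l(\sum a_{i_1\dots i_{l+1}}\mathbf e_{i_1}\otimes\cdots\otimes\mathbf e_{i_{l+1}})=\sum a_{1,i_2\dots i_{l+1}}\mathbf e_{i_2}\otimes\cdots\otimes\mathbf e_{i_{l+1}}$. For $z\in\mathbb R$, $\widetilde{\mathbf z}=\sum_{i=1}^{p+1}z^{i-1}\mathbf e_i$; for a sequence, $\widetilde{\mathbf z}_t$ corresponds to $z_t$ and $\widehat{\mathbf z}_t=\widetilde{\mathbf z}_{t-l}\otimes\cdots\otimes\widetilde{\mathbf z}_t$. Fix $I_0\subset\{1,\dots,p+1\}$ with $1\in I_0$, $|I_0|>1$,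 and $\widehat{\mathbf z}^0=\sum_{i\in I_0}z^{i-1}\mathbf e_1^{\otimes l}\otimes\mathbf e_i$. $U^{\rm SigSAS}_{\lambda,l,p}$ is the unique (echo state) solution filter of $\mathbf x_t=\lambda\pi_l(\mathbf x_{t-1})\otimes\widetilde{\mathbf z}_t+\widehat{\mathbf z}^0_t$ with uniformly bounded states. *)

(* Defs.v *)
From HB Require Import structures.
From mathcomp Require Import all_boot all_order all_algebra.
From mathcomp Require Import reals.
From Stdlib Require Import ClassicalEpsilon.
Set Implicit Arguments. Unset Strict Implicit. Unset Printing Implicit Defensive.
Import Order.TTheory GRing.Theory Num.Theory.
Local Open Scope ring_scope.

(* Canonical basis index of T^n(R^{p+1}): tuples (i_1,...,i_n), each i_k in
   {0,...,p} (0-based: ordinal i stands for basis vector e_{i+1}). *)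
Definition tidx (n p : nat) := {ffun 'I_n -> 'I_p.+1}.

(* An element of T^n(R^{p+1}) = its coefficient family in the canonical basis. *)
Definition tensor (R : realType) (n p : nat) := tidx n p -> R.

Definition tnorm (R : realType) n p (x : tensor R n p) : R :=
  Num.sqrt (\sum_(i : tidx n p) x i ^+ 2).

(* pi_l : T^{l+1} -> T^l, keeps coefficients with first index equal to 1
   (ordinal 0) and drops the first slot. *)
Definition tpi (R : realType) l p (x : tensor R l.+1 p) : tensor R l p :=
  fun j => x [ffun k : 'I_l.+1 =>
                match unlift ord0 k with Some k' => j k' | None => ord0 end].

(* Tensor product x (x) v of x in T^l with v in R^{p+1}, landing in T^{l+1};
   the factor v occupies the last slot. *)
Definition tprodv (R : realType) l p (x : tensor R l p) (v : 'I_p.+1 -> R)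
  : tensor R l.+1 p :=
  fun i => x [ffun j : 'I_l => i (widen_ord (leqnSn l) j)] * v (i ord_max).

(* tilde z = sum_{i=1}^{p+1} z^{i-1} e_i *)
Definition ztilde (R : realType) p (z : R) : 'I_p.+1 -> R := fun i => z ^+ i.

(* Time convention: t in Z_- is encoded by k : nat with t = -k, so a
   sequence z in R^{Z_-} is z : nat -> R with (z k) = z_{-k}. *)

(* hat z_t = tilde z_{t-l} (x) ... (x) tilde z_t ; slot m (0-based) carries
   z_{t-l+m}, i.e. z (k + l - m) when t = -k. *)
Definition zhat (R : realType) l p (z : nat -> R) (k : nat) : tensor R l.+1 p :=
  fun i => \prod_(m < l.+1) (z (k + l - m)%N) ^+ (i m).

(* hat z^0 = sum_{i in I0} z^{i-1} e_1^{(x) l} (x) e_i, evaluated at z_t. *)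
Definition zhat0 (R : realType) l p (I0 : {set 'I_p.+1}) (z : nat -> R) (k : nat)
  : tensor R l.+1 p :=
  fun i => if [forall m : 'I_l, i (widen_ord (leqnSn l) m) == ord0]
              && (i ord_max \in I0)
           then z k ^+ (i ord_max) else 0.

Definition sigsas_bounded_solution (R : realType) (lam : R) l p
  (I0 : {set 'I_p.+1}) (z : nat -> R) (x : nat -> tensor R l.+1 p) : Prop :=
  (forall k i, x k i = lam * tprodv (tpi (x k.+1)) (@ztilde R p (z k)) i
                       + @zhat0 R l p I0 z k i)
  /\ exists C : R, forall k, tnorm (x k) <= C.

Definition U_sigsas (R : realType) (lam : R) l p (I0 : {set 'I_p.+1})
  (z : nat -> R) : nat -> tensor R l.+1 p :=
  epsilon (inhabits (fun _ _ => 0)) (@sigsas_bounded_solution R lam l p I0 z).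

(* Main.v *)
Require Import Defs.
From HB Require Import structures.
From mathcomp Require Import all_boot all_order all_algebra.
From mathcomp Require Import reals.
From mathcomp Require Import ring lra zify.
From Stdlib Require Import ClassicalEpsilon.
Import Order.TTheory GRing.Theory Num.Theory.
Local Open Scope ring_scope.

Section S.
Variables (R : realType) (l p : nat) (I0 : {set 'I_p.+1}).

Definition shift (i : tidx l.+1 p) : tidx l.+1 p :=
  [ffun k : 'I_l.+1 => match unlift ord0 k with
      Some k' => ([ffun j : 'I_l => i (widen_ord (leqnSn l) j)]) k'
    | None => ord0 end].

Definition i0 : tidx l.+1 p := [ffun _ => ord0].

Definition ind (i : tidx l.+1 p) : bool :=
  [forall m : 'I_l, i (widen_ord (leqnSn l) m) == ord0] && (i ord_max \in I0).

Lemma tprodv_tpi (y : tensor R l.+1 p) v i :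
  tprodv (tpi y) v i = y (shift i) * v (i ord_max).
Proof. by []. Qed.

Lemma shift0 i : shift i ord0 = ord0.
Proof. by rewrite ffunE unlift_none. Qed.

Lemma shiftS i (m : 'I_l) : shift i (lift ord0 m) = i (widen_ord (leqnSn l) m).
Proof. by rewrite ffunE liftK ffunE. Qed.

Lemma iter_shift n i (m : 'I_l.+1) : (m < n)%N -> iter n shift i m = ord0.
Proof.
elim: n i m => [//|n IH] i m; rewrite iterS.
case: (unliftP ord0 m) => [m'|] -> Hm; last by rewrite shift0.
by rewrite shiftS IH //=; move: Hm; rewrite /= /bump /=; lia.
Qed.

Lemma shift_i0 : shift i0 = i0.
Proof.
apply/ffunP => m; case: (unliftP ord0 m) => [m'|] ->; first by rewrite shiftS !ffunE.
by rewrite shift0 ffunE.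
Qed.

Lemma iter_full i : iter l.+1 shift i = i0.
Proof. by apply/ffunP => m; rewrite iter_shift // ffunE. Qed.

Lemma ind_i0 : ord0 \in I0 -> ind i0.
Proof. by move=> H; rewrite /ind ffunE H andbT; apply/forallP => m; rewrite ffunE. Qed.

Lemma zhat_shift (z : nat -> R) k i :
  @zhat R l p z k.+1 (shift i) * z k ^+ (i ord_max) = @zhat R l p z k i.
Proof.
rewrite /zhat big_ord_recl big_ord_recr /= shift0 expr0 mul1r.
rewrite addnK.
congr (_ * _); apply: eq_bigr => m _.
rewrite shiftS /bump /=; congr (z _ ^+ _); rewrite /=; lia.
Qed.

Lemma zhat0E (z : nat -> R) k i :
  @zhat0 R l p I0 z k i = (ind i)%:R * @zhat R l p z k i.
Proof.
rewrite /zhat0 /ind; case: ifP => [/andP[/forallP H _]|_]; last by rewrite mul0r.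
rewrite mul1r /zhat big_ord_recr /= addnK big1 ?mul1r // => m _.
by rewrite (eqP (H m)) expr0.
Qed.
End S.
Arguments shift {l p}. Arguments ind {l p}. Arguments i0 {l p}.

Section S2.
Variables (R : realType) (l p : nat) (I0 : {set 'I_p.+1}) (lam : R).
Hypotheses (HI0 : ord0 \in I0) (lam0 : 0 < lam) (lam1 : lam < 1).

Definition cc (i : tidx l.+1 p) : R :=
  \sum_(s < l.+1) lam ^+ s * (ind I0 (iter s shift i))%:R
  + lam ^+ l.+1 / (1 - lam).

Lemma cc_rec i : cc i = lam * cc (shift i) + (ind I0 i)%:R.
Proof.
rewrite /cc mulrDr big_distrr /= [in LHS]big_ord_recl [in RHS]big_ord_recr /=.
rewrite -iterSr iter_full ind_i0 // expr0 mul1r.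
have -> : \sum_(i1 < l) lam * (lam ^+ widen_ord (leqnSn l) i1 *
            (ind I0 (iter (widen_ord (leqnSn l) i1) shift (shift i)))%:R)
   = \sum_(i1 < l) lam ^+ bump 0 i1 * (ind I0 (iter (bump 0 i1) shift i))%:R.
  by apply: eq_bigr => s _; rewrite /bump /= add1n -iterSr exprS mulrA.
have h : 1 - lam != 0 by rewrite subr_eq0 eq_sym lt_eqF.
rewrite /=; set S := \sum_(_ < _) _.
rewrite !exprS mulr1; move: (ind I0 i)%:R S (lam ^+ l) => a S L; by field.
Qed.

Lemma cc_pos i : 0 < cc i.
Proof.
apply: ltr_wpDl; first by apply: sumr_ge0 => s _; apply: mulr_ge0; [apply: exprn_ge0; apply: ltW|apply: ler0n].
by rewrite divr_gt0 ?exprn_gt0 // subr_gt0.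
Qed.

Definition cand (z : nat -> R) : nat -> tensor R l.+1 p :=
  fun k i => cc i * @zhat R l p z k i.

Lemma cand_rec z k i : cand z k i = lam * tprodv (tpi (cand z k.+1)) (@ztilde R p (z k)) i
                       + @zhat0 R l p I0 z k i.
Proof.
rewrite tprodv_tpi zhat0E /cand /ztilde -mulrA zhat_shift mulrA -mulrDl.
by rewrite -cc_rec.
Qed.

End S2.

Lemma entry_le_tnorm (R : realType) n p (x : tensor R n p) i : `|x i| <= tnorm x.
Proof.
rewrite /tnorm -sqrtr_sqr; apply: ler_wsqrtr.
rewrite (bigD1 i) //= lerDl; apply: sumr_ge0 => j _; exact: sqr_ge0.
Qed.

Lemma bernoulli (R : realType) (h : R) n : 0 <= h -> 1 + n%:R * h <= (1 + h) ^+ n.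
Proof.
move=> h0; elim: n => [|n IH]; first by rewrite mul0r addr0 expr0.
rewrite exprS -natr1.
have H1 : 0 <= n%:R * h by rewrite mulr_ge0.
have H2 : (1 + n%:R * h) * (1 + h) <= (1 + h) * (1 + h) ^+ n.
  by rewrite mulrC ler_wpM2l // addr_ge0.
apply: le_trans H2; nra.
Qed.

Lemma decay (R : realType) (lam a B : R) : 0 < lam -> lam < 1 ->
  (forall n, `|a| <= lam ^+ n * B) -> a = 0.
Proof.
move=> l0 l1 H; apply/normr0_eq0/eqP; rewrite eq_le normr_ge0 andbT.
rewrite leNgt; apply/negP => ha.
set h := lam^-1 - 1.
have hp : 0 < h by rewrite /h subr_gt0 invf_gt1.
have B0 : 0 <= B by have := H 0%N; rewrite expr0 mul1r => /(le_trans (normr_ge0 _)).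
set x := B / (`|a| * h).
have x0 : 0 <= x by rewrite /x divr_ge0 // mulr_ge0 // ltW.
have := archi_boundP x0; set n := Num.bound x => hn.
have := H n; have := @bernoulli R h n (ltW hp).
have -> : 1 + h = lam^-1 by rewrite /h; ring.
move=> Hb Ha.
have Hq : `|a| * lam^-1 ^+ n <= B.
  rewrite -(ler_pM2l (exprn_gt0 n l0)) mulrA mulrAC -exprMn mulfV ?gt_eqF //.
  by rewrite expr1n mul1r.
have : `|a| * (1 + n%:R * h) <= B.
  by apply: le_trans Hq; apply: ler_wpM2l => //; apply: ltW.
have : n%:R * (`|a| * h) > B.
  by move: hn; rewrite /x ltr_pdivrMr ?mulr_gt0.
move: (n%:R) => N; nra.
Qed.

Section S4.
Variables (R : realType) (l p : nat) (I0 : {set 'I_p.+1}) (lam : R).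
Hypotheses (lam0 : 0 < lam) (lam1 : lam < 1).

Lemma uniq_sol z x y :
  @sigsas_bounded_solution R lam l p I0 z x -> @sigsas_bounded_solution R lam l p I0 z y ->
  forall k i, x k i = y k i.
Proof.
move=> [Hx [Cx Bx]] [Hy [Cy By]].
pose d k i := x k i - y k i.
have Hd : forall k i, d k i = lam * d k.+1 (shift i) * z k ^+ (i ord_max).
  move=> k i; rewrite /d Hx Hy !tprodv_tpi /ztilde; ring.
have Hd0 : forall n k, d k i0 = lam ^+ n * d (k + n)%N i0.
  elim=> [|n IH] k; first by rewrite expr0 mul1r addn0.
  rewrite IH Hd shift_i0 ffunE expr0 mulr1 exprS addnS; ring.
have D0 : forall k, d k i0 = 0.
  move=> k; apply: (@decay R lam _ (Cx + Cy)) => // n.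
  rewrite (Hd0 n) normrM ger0_norm; last by rewrite exprn_ge0 // ltW.
  apply: ler_wpM2l; first by rewrite exprn_ge0 // ltW.
  rewrite /d (le_trans (ler_normB _ _)) // lerD //.
    exact: le_trans (@entry_le_tnorm _ _ _ _ _) (Bx _).
  exact: le_trans (@entry_le_tnorm _ _ _ _ _) (By _).
have Q : forall n k (i : tidx l.+1 p),
    (forall m : 'I_l.+1, (m + n <= l)%N -> i m = ord0) -> d k i = 0.
  elim=> [|n IH] k i Hi.
    have -> : i = i0 by apply/ffunP => m; rewrite ffunE Hi // addn0 -ltnS.
    exact: D0.
  rewrite Hd (IH k.+1) ?mulr0 ?mul0r // => m Hm.
  case: (unliftP ord0 m) Hm => [m'|] -> Hm; last by rewrite shift0.
  rewrite shiftS Hi //=; move: Hm; rewrite /= /bump /=; lia.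
move=> k i; apply/eqP; rewrite -subr_eq0; apply/eqP.
by apply: (Q l.+1) => m; rewrite /=; lia.
Qed.
End S4.

Lemma cand_bounded (R : realType) l p (I0 : {set 'I_p.+1}) (lam M : R) z :
  ord0 \in I0 -> 0 < lam -> lam < 1 -> 0 < M -> (forall k, `|z k| <= M) ->
  exists C : R, forall k, tnorm (@cand R l p I0 lam z k) <= C.
Proof.
move=> HI0 l0 l1 M0 Hz.
exists (Num.sqrt (\sum_i (@cc R l p I0 lam i * \prod_(m < l.+1) M ^+ (i m)) ^+ 2)).
move=> k; apply: ler_wsqrtr; apply: ler_sum => i _.
rewrite -(real_normK (num_real (cand _ _ _ _ _ _ _ _))) -(real_normK (num_real (_ * _))).
apply: lerXn2r; rewrite ?nnegrE ?normr_ge0 //.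
apply: le_trans (ler_norm _).
have c0 := ltW (@cc_pos R l p I0 lam l0 l1 i).
rewrite /cand normrM ger0_norm //; apply: ler_wpM2l => //.
rewrite /zhat normr_prod; apply: ler_prod => m _.
rewrite normrX exprn_ge0 ?normr_ge0 //=.
by apply: lerXn2r; rewrite ?nnegrE ?normr_ge0 // ltW.
Qed.

Theorem mainTheorem3 (R : realType) (M lam : R) (l p : nat)
  (I0 : {set 'I_p.+1}) :
  0 < M ->
  ord0 \in I0 -> (1 < #|I0|)%N ->
  0 < lam -> lam < 1 -> lam < (\sum_(j < p.+1) M ^+ j)^-1 ->
  exists A : 'M[R]_#|tidx l.+1 p|,
    A \in unitmx /\
    (forall a b, 0 <= A a b) /\
    (forall z : nat -> R, (forall k, `|z k| <= M) ->
       forall (k : nat) (i : tidx l.+1 p),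
         @U_sigsas R lam l p I0 z k i
         = \sum_(j : tidx l.+1 p) A (enum_rank i) (enum_rank j) * @zhat R l p z k j).
Proof.
move=> HM HI0 _ l0 l1 _.
pose c := @cc R l p I0 lam.
have cpos : forall i, 0 < c i := @cc_pos R l p I0 lam l0 l1.
exists (diag_mx (\row_a c (enum_val a))); split; [|split].
- rewrite unitmxE det_diag unitfE; apply/prodf_neq0 => a _.
  by rewrite mxE gt_eqF.
- move=> a b; rewrite !mxE mulrn_wge0 //; exact: ltW.
move=> z Hz k i.
have Hsol : @sigsas_bounded_solution R lam l p I0 z (@cand R l p I0 lam z).
  split; first by move=> k' i'; apply: cand_rec.
  exact: (@cand_bounded R l p I0 lam M z HI0 l0 l1 HM Hz).
have HU := epsilon_spec (inhabits (fun _ _ => 0)) _ (ex_intro _ _ Hsol).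
rewrite /U_sigsas (@uniq_sol R l p I0 lam l0 l1 z _ _ HU Hsol k i) /cand.
rewrite (bigD1 i) //= !mxE eqxx mulr1n enum_rankK big1 ?addr0 // => j Hj.
rewrite !mxE (inj_eq enum_rank_inj) eq_sym (negbTE Hj) mulr0n mul0r //.
Qed.
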